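(* Fix a partition $\Pi$ of $V(G)$ into sets of sizes divisible by $r$. Suppose each $f_v$ is $K_v$-Lipschitz and let $K_{\max}=\max_vK_v$. If $\mathcal P$ is sampled uniformly from the set of partitions of $V(G)$ into $n$ sets of size $r$ each contained in a single part of $\Pi$, and $T=T_{\vec B,\mathcal P}$ with $\vec B$ independent of $\mathcal P$, then $$\mathbb E_{\mathcal P}\big|\mathbb E_{\vec B}(\xi\mid\mathcal P)\big|\le\frac{2K_{\max}|\Pi|}{rn}.$$
   Context: Let $n,p,q$ be positive integers, $r=p+q$, $G$ a finite simple graph with $|V(G)|=rn$ and no isolated vertices; $\mathcal N(v)$, $d(v)$ neighbor set and degree. For each $v$, $f_v:2^{\mathcal N(v)}\to\mathbb R$ with $f_v(\emptyset)=0$. $\sigma_T(v)=q$ if $v\in T$, $-p$ otherwise; for $|T|=pn$, $\xi=\frac1{pqn}\sum_v\sigma_T(v)f_v(T\cap\mathcal N(v))$. $f_v$ is $K_v$-Lipschitz ($K_v>0$) if $|f_v(A)-f_v(A')|\le K_v|A\triangle A'|/d(v)$ for all $A,A'\subseteq\mathcal N(v)$. Restricted randomization: for $\mathcal P=(S_1,\dots,S_n)$, $S_i=\{w_i^1,\dots,w_i^r\}$, $B_i$ i.i.d. uniform $p$-subsets of $\{1,\dots,r\}$, $T_{\vec B,\mathcal P}=\{w_i^j:j\in B_i\}$. *)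

(* Defs.v *)
From HB Require Import structures.
From mathcomp Require Import all_boot all_order all_algebra.
Set Implicit Arguments. Unset Strict Implicit. Unset Printing Implicit Defensive.
Import Order.TTheory GRing.Theory Num.Theory.
Local Open Scope ring_scope.

Section Defs.
Variables (R : realFieldType) (V : finType).

Definition nbhd (e : rel V) (v : V) : {set V} := [set u | e v u].

Definition symdiff (A B : {set V}) : {set V} := (A :\: B) :|: (B :\: A).

Definition lipschitz (e : rel V) (fv : {set V} -> R) (Kv : R) (v : V) : Prop :=
  forall A A' : {set V}, A \subset nbhd e v -> A' \subset nbhd e v ->
    `|fv A - fv A'| <= Kv * #|symdiff A A'|%:R / #|nbhd e v|%:R.

Definition sigmaT (p q : nat) (T : {set V}) (v : V) : R :=
  if v \in T then q%:R else - p%:R.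

Definition xi (e : rel V) (f : V -> {set V} -> R) (p q n : nat) (T : {set V}) : R :=
  ((p * q * n)%N%:R)^-1 * \sum_(v : V) sigmaT p q T v * f v (T :&: nbhd e v).

Definition restricted_partitions (Pi : {set {set V}}) (r : nat) : {set {set {set V}}} :=
  [set P : {set {set V}} | [&& partition P [set: V],
      [forall S in P, #|S| == r] &
      [forall S in P, [exists X in Pi, S \subset X]]]].

(* the possible values of T_{B,P}: exactly p vertices from each block of P *)
Definition selections (P : {set {set V}}) (p : nat) : {set {set V}} :=
  [set T : {set V} | [forall S in P, #|T :&: S| == p]].

End Defs.

Definition avg (R : realFieldType) (X : finType) (A : {set X}) (F : X -> R) : R :=
  (#|A|%:R)^-1 * \sum_(x in A) F x.

(* E_B(xi | P): B_i i.i.d. uniform p-subsets, i.e. T uniform among selections *)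
Definition cond_exp_xi (R : realFieldType) (V : finType) (e : rel V)
  (f : V -> {set V} -> R) (p q n : nat) (P : {set {set V}}) : R :=
  avg (selections P p) (xi e f p q n).

(* Main.v *)
Require Import Defs.
From HB Require Import structures.
From mathcomp Require Import all_boot all_order all_algebra.
From mathcomp Require Import fingroup perm.
From mathcomp Require Import ring lra zify.
Import Order.TTheory GRing.Theory Num.Theory.
Local Open Scope ring_scope.

Lemma mem_tperm_imset {V : finType} (a b x : V) (A : {set V}) :
  (x \in tperm a b @: A) = (tperm a b x \in A).
Proof. by rewrite -{1}(tpermK a b x) mem_imset //; apply: perm_inj. Qed.

Lemma tperm_imset_fix {V : finType} {a b : V} {A : {set V}} :
  (a \in A) = (b \in A) -> tperm a b @: A = A.
Proof.
move=> hab; apply/setP=> x; rewrite mem_tperm_imset.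
by case: tpermP => [->|->|]; rewrite // hab.
Qed.

Lemma block_same {V : finType} {Pi : {set {set V}}} {B X : {set V}} {a b : V} :
  trivIset Pi -> B \in Pi -> a \in B -> b \in B -> X \in Pi -> (a \in X) = (b \in X).
Proof.
move=> tP BP aB bB XP; apply/idP/idP => h.
- by rewrite -(def_pblock tP XP h) (def_pblock tP BP aB).
- by rewrite -(def_pblock tP XP h) (def_pblock tP BP bB).
Qed.

Lemma sum_invol {M : nmodType} {X : finType} {phi : X -> X} {F : {set X}}
  {Q : pred X} {h : X -> M} :
  involutive phi -> (forall x, x \in F -> phi x \in F) ->
  \sum_(x in F | Q x) h x = \sum_(x in F | Q (phi x)) h (phi x).
Proof.
move=> inv hF; rewrite (reindex_inj (inv_inj inv)) /=.
apply: eq_bigl => x; congr (_ && _).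
apply/idP/idP => [/hF|//]; first by rewrite inv.
exact: hF.
Qed.

Lemma sel_inv {V : finType} {P : {set {set V}}} {p : nat} {B : {set V}} {a b : V} {T} :
  trivIset P -> B \in P -> a \in B -> b \in B ->
  T \in selections P p -> tperm a b @: T \in selections P p.
Proof.
move=> tP BP aB bB; rewrite !inE => /forallP hT; apply/forallP => S.
apply/implyP => SP; have := implyP (hT S) SP.
move=> h; rewrite -{1}(tperm_imset_fix (block_same tP BP aB bB SP)) -imsetI.
  by rewrite card_imset //; apply: perm_inj.
by move=> x y _ _; apply: perm_inj.
Qed.

Definition sameblk {V : finType} (P : {set {set V}}) (u v : V) :=
  [exists S in P, (u \in S) && (v \in S)].

Definition pmap {V : finType} (a b : V) (P : {set {set V}}) :=
  [set tperm a b @: (S : {set V}) | S in P].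

Lemma invol_imset {X : finType} (f : X -> X) (A : {set X}) :
  involutive f -> f @: (f @: A) = A.
Proof.
move=> inv; apply/setP => x; apply/imsetP/idP => [[y /imsetP[z zA ->] ->]|xA].
  by rewrite inv.
by exists (f x); rewrite ?inv // imset_f.
Qed.

Lemma tperm_imset_invol {V : finType} (a b : V) : involutive (fun T : {set V} => tperm a b @: T).
Proof. move=> T; apply: invol_imset; exact: tpermK. Qed.

Lemma pmap_invol {V : finType} (a b : V) : involutive (pmap a b).
Proof. move=> P; apply: invol_imset; exact: tperm_imset_invol. Qed.

Lemma sameblk_pmap {V : finType} (a b u v : V) P :
  sameblk (pmap a b P) u v = sameblk P (tperm a b u) (tperm a b v).
Proof.
apply/existsP/existsP => [[S' /andP[/imsetP[S SP ->] /andP[]]]|[S /andP[SP /andP[]]]].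
  by rewrite !mem_tperm_imset => h1 h2; exists S; rewrite SP h1 h2.
move=> h1 h2; exists (tperm a b @: S).
by rewrite /pmap imset_f //= !mem_tperm_imset h1 h2.
Qed.

Lemma sameblkE (V : finType) (P : {set {set V}}) u v :
  partition P [set: V] -> sameblk P u v = (u \in pblock P v).
Proof.
move=> hP; have tP := partition_trivIset hP.
have cv : v \in cover P by rewrite (cover_partition hP) inE.
apply/existsP/idP => [[S /andP[SP /andP[uS vS]]]|h].
  by rewrite (def_pblock tP SP vS).
by exists (pblock P v); rewrite pblock_mem // h mem_pblock cv.
Qed.

Lemma rp_inv {V : finType} {Pi : {set {set V}}} {r : nat} {X : {set V}} {a b : V} {P} :
  partition Pi [set: V] -> X \in Pi -> a \in X -> b \in X ->
  P \in restricted_partitions Pi r -> pmap a b P \in restricted_partitions Pi r.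
Proof.
move=> hPi XP aX bX; have tPi := partition_trivIset hPi.
rewrite !inE => /and3P[hP /forallP hc /forallP he].
have inj : injective (tperm a b) by apply: perm_inj.
apply/and3P; split.
- rewrite -(tperm_imset_fix (a:=a) (b:=b) (A:=[set: V])); last by rewrite !inE.
  by rewrite /pmap imset_partition.
- apply/forallP => S'; apply/implyP => /imsetP[S SP ->].
  by rewrite card_imset //; exact: (implyP (hc S) SP).
- apply/forallP => S'; apply/implyP => /imsetP[S SP ->].
  have /existsP[Y /andP[YP sSY]] := implyP (he S) SP.
  apply/existsP; exists Y; rewrite YP /=.
  rewrite -(tperm_imset_fix (block_same tPi XP aX bX YP)).
  exact: imsetS.
Qed.

Lemma exch_q {M : nmodType} {V : finType} {Sel : {set {set V}}} {B : {set V}} {v : V}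
  {p q : nat} {h : {set V} -> M} :
  (forall T, T \in Sel -> #|T :&: B| = p) -> #|B| = (p + q)%N ->
  \sum_(T in Sel | v \in T) h T *+ q =
  \sum_(u in B :\ v) \sum_(T in Sel | (v \in T) && (u \notin T)) h T.
Proof.
move=> hS hB.
have -> : \sum_(T in Sel | v \in T) h T *+ q =
   \sum_(T in Sel | v \in T) \sum_(u in B :\ v | u \notin T) h T.
  apply: eq_bigr => T /andP[TS vT].
  have e : #|B :\: T| = q by rewrite cardsD setIC hS // hB addKn.
  rewrite -{1}e -sumr_const; apply: eq_bigl => u; rewrite !inE.
  by case: (u =P v) => [->|]; rewrite ?vT ?andbF //= andbC.
rewrite (exchange_big_dep (fun u => u \in B :\ v)) /=; last by move=> T u _ /andP[].
apply: eq_bigr => u uB; apply: eq_bigl => T; rewrite uB /=.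
by rewrite -!andbA.
Qed.

Lemma exch_p {M : nmodType} {V : finType} {Sel : {set {set V}}} {B : {set V}} {v : V}
  {p : nat} {h : {set V} -> M} :
  (forall T, T \in Sel -> #|T :&: B| = p) ->
  \sum_(T in Sel | v \notin T) h T *+ p =
  \sum_(u in B :\ v) \sum_(T in Sel | (v \notin T) && (u \in T)) h T.
Proof.
move=> hS.
have -> : \sum_(T in Sel | v \notin T) h T *+ p =
   \sum_(T in Sel | v \notin T) \sum_(u in B :\ v | u \in T) h T.
  apply: eq_bigr => T /andP[TS vT].
  rewrite -(hS T TS) -sumr_const; apply: eq_bigl => u; rewrite !inE.
  by case: (u =P v) => [->|]; rewrite ?(negbTE vT) ?andbF //= andbC.
rewrite (exchange_big_dep (fun u => u \in B :\ v)) /=; last by move=> T u _ /andP[].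
apply: eq_bigr => u uB; apply: eq_bigl => T; rewrite uB /=.
by rewrite -!andbA.
Qed.

Lemma sel_count (R : realFieldType) (V : finType) (P : {set {set V}}) (p q : nat)
   (B : {set V}) (v u : V) :
  trivIset P -> (forall S, S \in P -> #|S| = (p + q)%N) -> B \in P -> v \in B ->
  u \in B :\ v ->
  ((p + q) * (p + q - 1))%:R *
     (\sum_(T in selections P p | (v \in T) && (u \notin T)) (1 : R)) =
  (p * q)%:R * #|selections P p|%:R.
Proof.
move=> tP hc BP vB uBv.
set Sel := selections P p.
have hS : forall T, T \in Sel -> #|T :&: B| = p.
  by move=> T; rewrite inE => /forallP/(_ B); rewrite BP /= => /eqP.
pose c (x : V) := \sum_(T in Sel | (v \in T) && (x \notin T)) (1 : R).
pose N (x : V) := \sum_(T in Sel | x \in T) (1 : R).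
have ca : forall x, x \in B :\ v -> c x = c u.
  move=> x xBv; rewrite /c (sum_invol (tperm_imset_invol x u)); last first.
    have xB : x \in B by move: xBv; rewrite !inE => /andP[].
    have uB : u \in B by move: uBv; rewrite !inE => /andP[].
    by move=> T; apply: (sel_inv tP BP).
  have xv : x != v by move: xBv; rewrite !inE => /andP[].
  have uv : u != v by move: uBv; rewrite !inE => /andP[].
  by apply: eq_bigl => T; rewrite !mem_tperm_imset tpermL tpermD.
have cb : c u *+ (p + q - 1) = N v *+ q.
  have e := @exch_q R V Sel B v p q (fun=> 1) hS (hc B BP); simpl in e.
  rewrite /N -[RHS]sumrMnl e.
  rewrite (eq_bigr (fun=> c u)) ?sumr_const; last by move=> x /ca.
  by rewrite -(hc B BP) (cardsD1 v B) vB add1n subn1.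
have nc : forall x, x \in B -> N x = N v.
  move=> x xB; rewrite /N (sum_invol (tperm_imset_invol v x)); last first.
    by move=> T; apply: (sel_inv tP BP).
  by apply: eq_bigl => T; rewrite !mem_tperm_imset ?tpermL ?tpermR.
have nd : N v *+ (p + q) = #|Sel|%:R *+ p.
  rewrite -(hc B BP) -sumr_const (eq_bigr N); last by move=> x /nc.
  rewrite /N (exchange_big_dep (fun T => T \in Sel)); last by move=> x T _ /andP[].
  rewrite /= (eq_bigr (fun=> (p%:R : R))); last first.
    move=> T TS; rewrite -(hS T TS) -sumr_const.
    by apply: eq_bigl => x; rewrite TS /= in_setI andbC.
  by rewrite sumr_const -!mulrnA mulnC.
rewrite -/Sel -/(c u) !mulr_natl [((p + q) * _)%N]mulnC mulrnA cb -mulrnA mulnC.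
by rewrite mulrnA nd -mulrnA.
Qed.
Arguments sel_count {R V P p q B v u}.

Lemma symdiff_card (V : finType) (N T : {set V}) (u v : V) :
  v \notin N -> v \in T -> u \notin T ->
  (#|symdiff (T :&: N) (tperm u v @: T :&: N)| <= (u \in N))%N.
Proof.
move=> vN vT uT.
have sub : symdiff (T :&: N) (tperm u v @: T :&: N) \subset N :&: [set u].
  apply/subsetP => x; rewrite /symdiff !inE mem_tperm_imset.
  case: (x =P u) => [->|xu]; first by rewrite andbT; case/orP => /and3P[].
  case: (x =P v) => [->|xv]; first by rewrite (negbTE vN) !andbF.
  rewrite tpermD; last by apply/eqP => e; apply: xv.
    by case: (x \in T); case: (x \in N).
  by apply/eqP => e; apply: xu.
case hu : (u \in N).
  apply: leq_trans (subset_leq_card sub) _.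
  by apply: leq_trans (subset_leq_card (subsetIr N [set u])) _; rewrite cards1.
have e0 : N :&: [set u] = set0.
  by apply/setP => x; rewrite !inE; case: (x =P u) => [->|]; rewrite ?hu ?andbF.
by rewrite e0 subset0 in sub; rewrite (eqP sub) cards0.
Qed.

Lemma sigma_bound (R : realFieldType) (V : finType) (e : rel V) (fv : {set V} -> R)
  (Kv : R) (P : {set {set V}}) (p q : nat) (B : {set V}) (v : V) :
  trivIset P -> (forall S, S \in P -> #|S| = (p + q)%N) -> B \in P -> v \in B ->
  ~~ e v v -> lipschitz e fv Kv v -> 0 <= Kv ->
  `|\sum_(T in selections P p) sigmaT R p q T v * fv (T :&: nbhd e v)| <=
   Kv / #|nbhd e v|%:R * \sum_(u in B :\ v) (u \in nbhd e v)%:R *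
      \sum_(T in selections P p | (v \in T) && (u \notin T)) (1 : R).
Proof.
move=> tP hc BP vB evv lip K0.
set Sel := selections P p; set N := nbhd e v.
have hS : forall T, T \in Sel -> #|T :&: B| = p.
  by move=> T; rewrite inE => /forallP/(_ B); rewrite BP /= => /eqP.
have vN : v \notin N by rewrite inE.
rewrite (bigID (fun T : {set V} => v \in T)) /=.
have e1 : \sum_(T in Sel | v \in T) sigmaT R p q T v * fv (T :&: N) =
          \sum_(T in Sel | v \in T) fv (T :&: N) *+ q.
  by apply: eq_bigr => T /andP[_ vT]; rewrite /sigmaT vT mulr_natl.
have e2 : \sum_(T in Sel | v \notin T) sigmaT R p q T v * fv (T :&: N) =
          - \sum_(T in Sel | v \notin T) fv (T :&: N) *+ p.
  rewrite -sumrN; apply: eq_bigr => T /andP[_ vT].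
  by rewrite /sigmaT (negbTE vT) mulNr mulr_natl.
rewrite e1 e2 (exch_q hS (hc B BP)) (exch_p hS) -sumrB.
rewrite (eq_bigr (fun u => \sum_(T in Sel | (v \in T) && (u \notin T))
            (fv (T :&: N) - fv (tperm u v @: T :&: N)))); last first.
  move=> u uBv; rewrite [X in _ - X](sum_invol (tperm_imset_invol u v)); last first.
    have uB : u \in B by move: uBv; rewrite !inE => /andP[].
    by move=> T; apply: (sel_inv tP BP).
  rewrite sumrB; congr (_ - _); apply: eq_bigl => T.
  rewrite !mem_tperm_imset tpermL tpermR.
  by case: (T \in Sel); case: (v \in T); case: (u \in T).
rewrite mulr_sumr; apply: (le_trans (ler_norm_sum _ _ _)); apply: ler_sum => u uBv.
rewrite mulr_sumr mulr_sumr; apply: (le_trans (ler_norm_sum _ _ _)).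
apply: ler_sum => T /andP[TS /andP[vT uT]].
rewrite mulr1; apply: (le_trans (lip _ _ (subsetIr _ _) (subsetIr _ _))).
rewrite mulrAC; apply: ler_wpM2l.
  by apply: divr_ge0 => //; apply: ler0n.
by rewrite ler_nat; apply: symdiff_card.
Qed.
Arguments sigma_bound {R V e fv Kv P p q B v}.

Lemma per_P (R : realFieldType) (V : finType) (n p q : nat)
  (e : rel V) (f : V -> {set V} -> R) (K : V -> R) (P : {set {set V}}) :
  (0 < n)%N -> (0 < p)%N -> (0 < q)%N -> irreflexive e ->
  (forall v : V, 0 <= K v) ->
  (forall v : V, lipschitz e (f v) (K v) v) ->
  partition P [set: V] -> (forall S, S \in P -> #|S| = (p + q)%N) ->
  `|cond_exp_xi e f p q n P| <=
  ((n * (p + q) * (p + q - 1))%N%:R)^-1 *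
   \sum_(v : V) K v / #|nbhd e v|%:R *
      \sum_(u in pblock P v :\ v) (u \in nbhd e v)%:R.
Proof.
move=> n0 p0 q0 irr K0 lip hP hc.
have tP := partition_trivIset hP.
set Sel := selections P p.
set r := (p + q)%N.
have r0 : (r * (r - 1))%N%:R != 0 :> R.
  by rewrite pnatr_eq0 muln_eq0 negb_or /r; apply/andP; split; apply/eqP; lia.
have key : forall v, `|\sum_(T in Sel) sigmaT R p q T v * f v (T :&: nbhd e v)| <=
    ((p * q)%N%:R * #|Sel|%:R / (r * (r - 1))%N%:R) *
    (K v / #|nbhd e v|%:R * \sum_(u in pblock P v :\ v) (u \in nbhd e v)%:R).
  move=> v.
  have cv : v \in cover P by rewrite (cover_partition hP) inE.
  have BP := pblock_mem cv.
  have vB : v \in pblock P v by rewrite mem_pblock.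
  apply: (le_trans (sigma_bound tP hc BP vB _ (lip v) (K0 v))); first by rewrite irr.
  rewrite mulrCA; apply: ler_wpM2l.
    by apply: divr_ge0 => //; apply: ler0n.
  rewrite mulr_sumr; apply: ler_sum => u uB.
  have := sel_count (R:=R) tP hc BP vB uB; rewrite -/Sel => ec.
  have -> : \sum_(T in Sel | (v \in T) && (u \notin T)) (1 : R) =
      (p * q)%N%:R * #|Sel|%:R / (r * (r - 1))%N%:R.
    by rewrite -ec mulrC mulKf.
  by rewrite mulrC.
rewrite /cond_exp_xi /avg /xi.
rewrite -mulr_sumr (exchange_big) /= normrM normrM ger0_norm ?invr_ge0 ?ler0n //.
rewrite ger0_norm ?invr_ge0 ?ler0n //.
apply: (le_trans (ler_wpM2l _ (ler_wpM2l _ (ler_norm_sum _ _ _)))).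
- by rewrite invr_ge0 ler0n.
- by rewrite invr_ge0 ler0n.
apply: (le_trans (ler_wpM2l _ (ler_wpM2l _ (ler_sum _ (fun v _ => key v))))).
- by rewrite invr_ge0 ler0n.
- by rewrite invr_ge0 ler0n.
rewrite -mulr_sumr.
set S := \sum_(v : V) _.
have S0 : 0 <= S.
  apply: sumr_ge0 => v _; apply: mulr_ge0; first by apply: divr_ge0 => //; apply: ler0n.
  by apply: sumr_ge0 => u _; apply: ler0n.
case: (posnP #|Sel|) => [->|Sp].
  by rewrite invr0 mul0r; apply: mulr_ge0 => //; rewrite invr_ge0 ler0n.
rewrite -/Sel le_eqVlt; apply/orP; left; apply/eqP.
have Sn : #|Sel|%:R != 0 :> R by rewrite pnatr_eq0 -lt0n.
have pqn : (p * q * n)%N%:R != 0 :> R by rewrite pnatr_eq0; apply/eqP; nia.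
have nr : (n * r * (r - 1))%N%:R != 0 :> R by rewrite pnatr_eq0 /r; apply/eqP; nia.
move: r0 Sn pqn nr; rewrite !natrM => r0 Sn pqn nr.
by field; rewrite Sn !pnatr_eq0 /r; apply/and5P; split; apply/eqP; lia.
Qed.

Lemma rp_block_sub {V : finType} {Pi : {set {set V}}} {r : nat} {X : {set V}} {v : V} {P} :
  partition Pi [set: V] -> X \in Pi -> v \in X ->
  P \in restricted_partitions Pi r -> pblock P v \subset X.
Proof.
move=> hPi XP vX; rewrite inE => /and3P[hP _ /forallP he].
have cv : v \in cover P by rewrite (cover_partition hP) inE.
have BP := pblock_mem cv.
have /existsP[Y /andP[YP sY]] := implyP (he _) BP.
have vY : v \in Y by apply: (subsetP sY); rewrite mem_pblock.
have tPi := partition_trivIset hPi.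
by rewrite -(def_pblock tPi XP vX) (def_pblock tPi YP vY).
Qed.

Lemma rp_count (R : realFieldType) (V : finType) (Pi : {set {set V}}) (r : nat)
  (X : {set V}) (v u : V) :
  partition Pi [set: V] -> X \in Pi -> v \in X -> u \in X :\ v ->
  (#|X| - 1)%:R * \sum_(P in restricted_partitions Pi r | sameblk P u v) (1 : R) =
  (r - 1)%:R * #|restricted_partitions Pi r|%:R.
Proof.
move=> hPi XP vX uXv.
set RP := restricted_partitions Pi r.
pose m (x : V) := \sum_(P in RP | sameblk P x v) (1 : R).
have ma : forall x, x \in X :\ v -> m x = m u.
  move=> x xXv.
  have xX : x \in X by move: xXv; rewrite !inE => /andP[].
  have uX : u \in X by move: uXv; rewrite !inE => /andP[].
  have xv : x != v by move: xXv; rewrite !inE => /andP[].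
  have uv : u != v by move: uXv; rewrite !inE => /andP[].
  rewrite /m (sum_invol (pmap_invol x u)); last by move=> P; apply: (rp_inv hPi XP).
  by apply: eq_bigl => P; rewrite sameblk_pmap tpermL tpermD.
have mb : \sum_(x in X :\ v) m x = #|RP|%:R *+ (r - 1).
  rewrite /m (exchange_big_dep (fun P => P \in RP)) /=; last by move=> x P _ /andP[].
  rewrite -mulrnA mulnC mulrnA -sumr_const; apply: eq_bigr => P PR.
  have hP : partition P [set: V] by move: PR; rewrite inE => /and3P[].
  have hc : #|pblock P v| = r.
    have cv : v \in cover P by rewrite (cover_partition hP) inE.
    move: PR; rewrite inE => /and3P[_ /forallP/(_ (pblock P v)) hc _].
    by apply/eqP; rewrite (implyP hc) // pblock_mem.
  have sub := rp_block_sub hPi XP vX PR.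
  have -> : (r - 1 = #|pblock P v :\ v|)%N.
    by move: (cardsD1 v (pblock P v)); rewrite mem_pblock (cover_partition hP) inE hc; lia.
  rewrite -sumr_const; apply: eq_bigl => x; rewrite PR /= sameblkE // !inE.
  case: (x =P v) => [->|] //=; case xB: (x \in pblock P v); rewrite ?andbF //.
  by rewrite (subsetP sub _ xB).
rewrite (eq_bigr (fun=> m u)) in mb; last by move=> x /ma.
have cX : #|X :\ v| = (#|X| - 1)%N by rewrite [in RHS](cardsD1 v X) vX add1n subn1.
rewrite sumr_const cX in mb.
rewrite -/(m u) !mulr_natl mb.
by rewrite -!mulrnA mulnC.
Qed.

Lemma factA (R : realFieldType) (V : finType) (e : rel V) (Pi : {set {set V}}) (r : nat) (v : V) :
  partition Pi [set: V] -> irreflexive e -> (1 < #|pblock Pi v|)%N ->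
  \sum_(P in restricted_partitions Pi r) \sum_(u in pblock P v :\ v) ((u \in nbhd e v)%:R : R)
  <= #|nbhd e v|%:R * ((r - 1)%:R / (#|pblock Pi v| - 1)%:R) * #|restricted_partitions Pi r|%:R.
Proof.
move=> hPi irr X1.
set RP := restricted_partitions Pi r; set X := pblock Pi v; set N := nbhd e v.
have cv : v \in cover Pi by rewrite (cover_partition hPi) inE.
have XP : X \in Pi by apply: pblock_mem.
have vX : v \in X by rewrite mem_pblock.
have vN : v \notin N by rewrite inE irr.
set M := (r - 1)%:R / (#|X| - 1)%:R.
have M0 : 0 <= M by apply: divr_ge0; apply: ler0n.
rewrite (eq_bigr (fun P => \sum_(u in N | sameblk P u v) (1 : R))); last first.
  move=> P PR; have hP : partition P [set: V] by move: PR; rewrite inE => /and3P[].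
  rewrite big_mkcond [RHS]big_mkcond /=; apply: eq_bigr => u _.
  rewrite sameblkE // !inE.
  case: (u =P v) => [->|_] /=; first by rewrite irr.
  by case: (u \in pblock P v); case: (e v u).
rewrite (exchange_big_dep (fun u => u \in N)) /=; last by move=> P u _ /andP[].
rewrite -mulrA mulr_natl -sumr_const; apply: ler_sum => u uN.
have uv : u != v by apply: contraNneq vN => <-.
case uX : (u \in X).
  have uXv : u \in X :\ v by rewrite !inE uv uX.
  have := @rp_count R V Pi r X v u hPi XP vX uXv; rewrite -/RP => ec.
  have X0 : (#|X| - 1)%:R != 0 :> R by rewrite pnatr_eq0 subn_eq0 -ltnNge.
  rewrite le_eqVlt; apply/orP; left; apply/eqP.
  rewrite /M mulrAC -ec mulrC mulKf //.
  by apply: eq_bigl => P; rewrite uN.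
rewrite big_pred0; first by apply: mulr_ge0 => //; apply: ler0n.
move=> P; apply/negP => /andP[PR /andP[_ sb]].
have hP : partition P [set: V] by move: PR; rewrite inE => /and3P[].
rewrite sameblkE // in sb.
by rewrite (subsetP (rp_block_sub hPi XP vX PR) _ sb) in uX.
Qed.

Lemma factB (R : realFieldType) (V : finType) (Pi : {set {set V}}) :
  partition Pi [set: V] -> \sum_(v : V) ((#|pblock Pi v|%:R : R))^-1 = #|Pi|%:R.
Proof.
move=> hPi; have tPi := partition_trivIset hPi.
rewrite (eq_bigl (fun v => v \in cover Pi)); last by move=> v; rewrite (cover_partition hPi) inE.
rewrite big_trivIset //.
rewrite (eq_bigr (fun=> 1)) ?sumr_const //.
move=> A AP; rewrite (eq_bigr (fun=> (#|A|%:R)^-1)); last by move=> v vA; rewrite (def_pblock tPi AP vA).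
rewrite sumr_const -[X in X = _]mulr_natr mulVf // pnatr_eq0 cards_eq0.
exact: partition_neq0 hPi AP.
Qed.

Lemma le_bigmax0 (R : realFieldType) (V : finType) (F : V -> R) (v : V) :
  F v <= \big[Num.max/0]_(x : V) F x.
Proof. by rewrite (bigD1 v) //= le_max lexx. Qed.

Lemma inv_bound (R : realFieldType) (x : R) : 2 <= x -> (x - 1)^-1 <= 2 * x^-1.
Proof.
move=> x2.
have -> : 2 * x^-1 = (x / 2)^-1 by rewrite invfM invrK mulrC.
rewrite lef_pV2 ?posrE; lra.
Qed.

Theorem mainTheorem16 (R : realFieldType) (V : finType) (n p q : nat)
  (e : rel V) (f : V -> {set V} -> R) (K : V -> R) (Pi : {set {set V}}) :
  (0 < n)%N -> (0 < p)%N -> (0 < q)%N ->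
  #|V| = ((p + q) * n)%N ->
  symmetric e -> irreflexive e ->
  (forall v : V, exists u : V, e v u) ->
  (forall v : V, f v set0 = 0) ->
  (forall v : V, 0 < K v) ->
  (forall v : V, lipschitz e (f v) (K v) v) ->
  partition Pi [set: V] ->
  (forall X : {set V}, X \in Pi -> (p + q %| #|X|)%N) ->
  avg (restricted_partitions Pi (p + q))
      (fun P => `|cond_exp_xi e f p q n P|)
  <= 2 * \big[Num.max/0]_(v : V) K v * #|Pi|%:R / ((p + q) * n)%N%:R.
Proof.
move=> n0 p0 q0 hV sym irr nb f0 Kp lip hPi hdiv.
set r := (p + q)%N.
set Km := \big[Num.max/0]_(v : V) K v.
set RP := restricted_partitions Pi r.
have K0 : forall v, 0 <= K v by move=> v; apply: ltW.
have KmK : forall v, K v <= Km by move=> v; apply: le_bigmax0.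
have Km0 : 0 <= Km.
  rewrite /Km; apply: (big_ind (fun x : R => 0 <= x)).
  - by [].
  - by move=> x y hx hy; rewrite le_max hx.
  - by move=> i _; exact: (K0 i).
have tPi := partition_trivIset hPi.
have hX : forall v, (1 < #|pblock Pi v|)%N.
  move=> v.
  have cv : v \in cover Pi by rewrite (cover_partition hPi) inE.
  have XP := pblock_mem cv.
  have c0 : (0 < #|pblock Pi v|)%N by apply/card_gt0P; exists v; rewrite mem_pblock.
  have := dvdn_leq c0 (hdiv _ XP); rewrite /r; lia.
have hd : forall v, (0 < #|nbhd e v|)%N.
  by move=> v; have [u evu] := nb v; apply/card_gt0P; exists u; rewrite inE.
have rhs0 : 0 <= 2 * Km * #|Pi|%:R / ((p + q) * n)%N%:R.
  apply: divr_ge0; last exact: ler0n.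
  by apply: mulr_ge0; [apply: mulr_ge0 => //; lra | exact: ler0n].
rewrite /avg -/r -/RP.
case: (posnP #|RP|) => [RP0|RPp].
  by rewrite RP0 invr0 mul0r.
set c0 := ((n * r * (r - 1))%N%:R : R)^-1.
have c00 : 0 <= c0 by rewrite invr_ge0 ler0n.
pose w (P : {set {set V}}) (v : V) :=
  \sum_(u in pblock P v :\ v) ((u \in nbhd e v)%:R : R).
pose M (v : V) := ((r - 1)%:R / (#|pblock Pi v| - 1)%:R : R).
have step1 : \sum_(P in RP) `|cond_exp_xi e f p q n P| <=
    \sum_(P in RP) \sum_(v : V) c0 * (Km / #|nbhd e v|%:R * w P v).
  apply: ler_sum => P PR.
  have hP : partition P [set: V] by move: PR; rewrite inE => /and3P[].
  have hc : forall S, S \in P -> #|S| = r.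
    move: PR; rewrite inE => /and3P[_ /forallP hc _] S SP.
    by apply/eqP; exact: (implyP (hc S) SP).
  apply: le_trans (@per_P R V n p q e f K P n0 p0 q0 irr K0 lip hP hc) _.
  rewrite mulr_sumr; apply: ler_sum => v _; apply: ler_wpM2l => //.
  apply: ler_wpM2r; first by apply: sumr_ge0 => u _; apply: ler0n.
  by apply: ler_wpM2r => //; rewrite invr_ge0 ler0n.
have step2 : \sum_(P in RP) \sum_(v : V) c0 * (Km / #|nbhd e v|%:R * w P v) <=
    \sum_(v : V) c0 * (Km / #|nbhd e v|%:R *
       (#|nbhd e v|%:R * M v * #|RP|%:R)).
  rewrite exchange_big /=; apply: ler_sum => v _.
  rewrite -mulr_sumr -mulr_sumr; apply: ler_wpM2l => //.
  apply: ler_wpM2l; first by apply: divr_ge0 => //; apply: ler0n.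
  exact: factA.
apply: le_trans (ler_wpM2l _ (le_trans step1 step2)) _.
  by rewrite invr_ge0 ler0n.
have RPn : #|RP|%:R != 0 :> R by rewrite pnatr_eq0 -lt0n.
have step3 : #|RP|%:R^-1 * \sum_(v : V) c0 * (Km / #|nbhd e v|%:R *
       (#|nbhd e v|%:R * M v * #|RP|%:R)) = \sum_(v : V) c0 * Km * M v.
  rewrite mulr_sumr; apply: eq_bigr => v _.
  have dn : #|nbhd e v|%:R != 0 :> R by rewrite pnatr_eq0 -lt0n.
  by field; rewrite dn RPn.
rewrite step3.
have step4 : forall v, c0 * Km * M v <=
    2 * Km / ((p + q) * n)%N%:R * (#|pblock Pi v|%:R)^-1.
  move=> v; rewrite /c0 /M.
  have X2 : (2 : R) <= #|pblock Pi v|%:R by rewrite -[2]/(2%:R) ler_nat hX.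
  have eX : (#|pblock Pi v| - 1)%:R = #|pblock Pi v|%:R - 1 :> R.
    by rewrite natrB ?(ltnW (hX v)).
  have r1 : (r - 1)%:R != 0 :> R by rewrite pnatr_eq0 /r; apply/eqP; lia.
  have nr : (n * r)%:R != 0 :> R by rewrite pnatr_eq0 /r; apply/eqP; nia.
  have -> : ((n * r * (r - 1))%N%:R)^-1 * Km * ((r - 1)%:R / (#|pblock Pi v| - 1)%:R)
       = Km / (n * r)%:R * (#|pblock Pi v|%:R - 1)^-1.
    rewrite eX natrM; move: r1 nr; rewrite natrM => r1 nr.
    have a1 : #|pblock Pi v|%:R - 1 != 0 :> R by apply: lt0r_neq0; lra.
    by field; rewrite a1 r1 !pnatr_eq0 -!lt0n n0 /r addn_gt0 p0.
  have -> : 2 * Km / ((p + q) * n)%N%:R * (#|pblock Pi v|%:R)^-1 =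
       Km / (n * r)%:R * (2 * (#|pblock Pi v|%:R)^-1).
    have a2 : #|pblock Pi v|%:R != 0 :> R by apply: lt0r_neq0; lra.
    by rewrite -/r mulnC; field; rewrite a2 !pnatr_eq0 -!lt0n n0 /r addn_gt0 p0.
  apply: ler_wpM2l; first by apply: divr_ge0 => //; apply: ler0n.
  exact: inv_bound.
apply: le_trans (ler_sum _ (fun v _ => step4 v)) _.
by rewrite -mulr_sumr factB // -/r mulrAC.
Qed.
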